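(* In the setting described in the context, the restriction of the second fundamental form $\mathrm{II}_p$ to $\mathfrak n_-p\times\mathfrak n_-p\to\nu_pM$ is $\mathbb{C}$-bilinear, and consequently $\mathrm{II}_p(fp,f'p)=(ff'p)^\nu$ for all $f,f'\in\mathfrak n_-$.
   Context: Let $K$ be a compact Lie group with Lie algebra $\mathfrak k$, and let $\rho$ be an irreducible orthogonal representation of $K$ which admits a $K$-invariant complex structure; regard it as a complex irreducible representation $V$ of $K$, equipped with the $K$-invariant Hermitian product $\langle\cdot,\cdot\rangle$ whose real part is the original inner product; $S$ denotes the unit sphere of $V$. The complexification $\mathfrak g=\mathfrak k^{\mathbb C}$ acts complex-linearly on $V$. Fix a maximal torus $T$ of $K$ with Lie algebra $\mathfrak t$, let $\mathfrak h=\mathfrak t^{\mathbb C}$ (a Cartan subalgebra of $\mathfrak g$), let $\mathfrak g=\mathfrak h+\sum_{\alpha\in\Delta}\mathfrak g_\alpha$ be the root decomposition, choose a system of positive roots $\Delta^+$, and put $\mathfrak n_-=\sum_{\alpha\in\Delta^+}\mathfrak g_{-\alpha}$. Let $\lambda$ be the highest weight of $V$ and let $p=v_\lambda$ be a unit highest weight vector; let $M=Kp\subset S$. Then $T_pM=\mathfrak k p=i\mathbb{R}p+\mathfrak n_-p$, and the normal space of $M$ in $S$ at $p$ is $\nu_pM=(\mathbb{C}p+\mathfrak n_-p)^\perp$ (Hermitian orthogonal complement). The second fundamental form $\mathrm{II}_p:T_pM\times T_pM\to\nu_pM$ of $M$ in $S$ at $p$ is given by $\mathrm{II}_p(xp,yp)=(xyp)^\nu$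 for $x,y\in\mathfrak k$, where $(\cdot)^\nu$ denotes orthogonal projection onto $\nu_pM$. *)

(* Defs.v *)
(* compact Lie algebra data realised concretely as matrices
   over R[i] (R : realType). *)
From HB Require Import structures.
From mathcomp Require Import all_boot all_order all_algebra.
From mathcomp Require Import complex.
From mathcomp Require Import reals.
Set Implicit Arguments. Unset Strict Implicit. Unset Printing Implicit Defensive.
Import Order.TTheory GRing.Theory Num.Theory.
Local Open Scope ring_scope.
Local Open Scope complex_scope.

Section LieSetting.
Variables (R : realType) (n : nat).
Local Notation C := R[i].
Local Notation Mat := 'M[C]_n.
Local Notation V := 'cV[C]_n.

Definition adjmx (X : Mat) : Mat := (map_mx conjc X)^T.

(* Hermitian product on V = C^n, conjugate-linear in the first slot;
   its real part is the standard Euclidean inner product on R^(2n). *)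
Definition hdot (u v : V) : C := \sum_(i < n) conjc (u i 0) * v i 0.

Definition lie_bracket (X Y : Mat) : Mat := X * Y - Y * X.

(* k : the image in End(V) of the Lie algebra of the compact group K acting
   unitarily (hence by skew-Hermitian matrices): a real Lie subalgebra of u(n). *)
Definition unitary_lie_algebra (k : Mat -> Prop) : Prop :=
  [/\ k 0,
      (forall X Y, k X -> k Y -> k (X + Y)),
      (forall (r : R) X, k X -> k (r%:C *: X)),
      (forall X Y, k X -> k Y -> k (lie_bracket X Y)) &
      (forall X, k X -> adjmx X = - X)].

Definition real_subspace (W : V -> Prop) : Prop :=
  [/\ W 0, (forall u v, W u -> W v -> W (u + v)) &
      (forall (r : R) u, W u -> W (r%:C *: u))].

Definition real_irreducible (k : Mat -> Prop) : Prop :=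
  (0 < n)%N /\
  forall W : V -> Prop, real_subspace W ->
    (forall X v, k X -> W v -> W (X *m v)) ->
    (forall v, W v -> v = 0) \/ (forall v, W v).

(* t : Lie algebra of a maximal torus = a maximal abelian subalgebra of k *)
Definition maximal_abelian (k t : Mat -> Prop) : Prop :=
  (forall X, t X -> k X) /\
  [/\ t 0, (forall X Y, t X -> t Y -> t (X + Y)),
      (forall (r : R) X, t X -> t (r%:C *: X)),
      (forall X Y, t X -> t Y -> X * Y = Y * X) &
      (forall X, k X -> (forall Y, t Y -> X * Y = Y * X) -> t X)].

(* complexifications g = k^C and h = t^C, realised inside End(V) *)
Definition complexify (k : Mat -> Prop) (X : Mat) : Prop :=
  exists A B, [/\ k A, k B & X = A + 'i *: B].

Definition root_vector (k t : Mat -> Prop) (alpha : Mat -> C) (X : Mat) : Prop :=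
  complexify k X /\
  forall H, complexify t H -> lie_bracket H X = alpha H *: X.

Definition is_root (k t : Mat -> Prop) (alpha : Mat -> C) : Prop :=
  [/\ (forall (c : C) H1 H2, complexify t H1 -> complexify t H2 ->
          alpha (c *: H1 + H2) = c * alpha H1 + alpha H2),
      (exists H, complexify t H /\ alpha H <> 0) &
      (exists X, X <> 0 /\ root_vector k t alpha X)].

(* A system of positive roots is given by a regular element H0 of t:
   Delta^+ = { alpha | -i alpha(H0) > 0 } (roots are imaginary on t). *)
Definition regular_element (k t : Mat -> Prop) (H0 : Mat) : Prop :=
  t H0 /\ forall alpha, is_root k t alpha -> alpha H0 <> 0.

Definition positive_root (k t : Mat -> Prop) (H0 : Mat) (alpha : Mat -> C) : Prop :=
  is_root k t alpha /\ 0 < complex.Im (alpha H0).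

Definition in_nminus (k t : Mat -> Prop) (H0 : Mat) (X : Mat) : Prop :=
  exists s : seq Mat,
    (forall Y, Y \in s -> exists alpha, positive_root k t H0 alpha /\
        root_vector k t (fun H => - alpha H) Y) /\
    X = \sum_(Y <- s) Y.

Definition highest_weight_vector (k t : Mat -> Prop) (H0 : Mat) (p : V) : Prop :=
  [/\ p <> 0,
      (exists lambda : Mat -> C,
          forall H, complexify t H -> H *m p = lambda H *: p) &
      (forall alpha X, positive_root k t H0 alpha -> root_vector k t alpha X ->
          X *m p = 0)].

Definition tangent_at (k : Mat -> Prop) (p : V) (v : V) : Prop :=
  exists X, k X /\ v = X *m p.

Definition in_nminus_p (k t : Mat -> Prop) (H0 : Mat) (p : V) (v : V) : Prop :=
  exists f, in_nminus k t H0 f /\ v = f *m p.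

(* nu_p M = (C p + n_- p)^perp *)
Definition normal_at (k t : Mat -> Prop) (H0 : Mat) (p : V) (w : V) : Prop :=
  forall (c : C) f, in_nminus k t H0 f -> hdot (c *: p + f *m p) w = 0.

Definition is_normal_projection (k t : Mat -> Prop) (H0 : Mat) (p : V)
    (P : V -> V) : Prop :=
  forall v, normal_at k t H0 p (P v) /\
    forall w, normal_at k t H0 p w -> hdot w (v - P v) = 0.

(* II is the second fundamental form of M = Kp in S at p:
   II_p(xp, yp) = (x y p)^nu for x, y in k *)
Definition is_second_fundamental_form (k : Mat -> Prop) (p : V) (P : V -> V)
    (II : V -> V -> V) : Prop :=
  forall X Y, k X -> k Y -> II (X *m p) (Y *m p) = P (X *m (Y *m p)).

Definition C_bilinear_on (D : V -> Prop) (II : V -> V -> V) : Prop :=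
  forall (c : C) u u' v, D u -> D u' -> D v ->
    II (c *: u + u') v = c *: II u v + II u' v /\
    II v (c *: u + u') = c *: II v u + II v u'.

End LieSetting.

(* Main.v *)
Require Import Defs.
From HB Require Import structures.
From mathcomp Require Import all_boot all_order all_algebra.
From mathcomp Require Import complex.
From mathcomp Require Import reals.
From mathcomp Require Import ring.
From Stdlib Require Import Classical.
Import Order.TTheory GRing.Theory Num.Theory.
Local Open Scope ring_scope.
Local Open Scope complex_scope.
Set Implicit Arguments. Unset Strict Implicit. Unset Printing Implicit Defensive.

Section Basics.
Variables (R : realType) (n : nat).
Local Notation C := R[i].
Local Notation Mat := 'M[C]_n.
Local Notation V := 'cV[C]_n.

Lemma adjmxE (X : Mat) i j : adjmx X i j = conjc (X j i).
Proof. by rewrite /adjmx !mxE. Qed.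

Lemma adjmxD (X Y : Mat) : adjmx (X + Y) = adjmx X + adjmx Y.
Proof. by apply/matrixP=> i j; rewrite !mxE rmorphD. Qed.

Lemma adjmxN (X : Mat) : adjmx (- X) = - adjmx X.
Proof. by apply/matrixP=> i j; rewrite !mxE rmorphN. Qed.

Lemma adjmx0 : adjmx (0 : Mat) = 0.
Proof. by apply/matrixP=> i j; rewrite !mxE rmorph0. Qed.

Lemma adjmxZ (c : C) (X : Mat) : adjmx (c *: X) = conjc c *: adjmx X.
Proof. by apply/matrixP=> i j; rewrite !mxE rmorphM. Qed.

Lemma adjmxK (X : Mat) : adjmx (adjmx X) = X.
Proof. by apply/matrixP=> i j; rewrite !mxE conjcK. Qed.

Lemma adjmxM (X Y : Mat) : adjmx (X * Y) = adjmx Y * adjmx X.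
Proof.
apply/matrixP=> i j; rewrite -!mulmxE !mxE rmorph_sum; apply: eq_bigr => l _.
by rewrite !mxE rmorphM mulrC.
Qed.

Lemma tr_adjmx (X : Mat) : \tr (adjmx X) = conjc (\tr X).
Proof. by rewrite /mxtrace rmorph_sum; apply: eq_bigr => l _; rewrite adjmxE. Qed.

Definition sig (X : Mat) : Mat := - adjmx X.

Lemma sigK X : sig (sig X) = X.
Proof. by rewrite /sig adjmxN adjmxK opprK. Qed.

Lemma sigD X Y : sig (X + Y) = sig X + sig Y.
Proof. by rewrite /sig adjmxD opprD. Qed.

Lemma sig0 : sig 0 = 0.
Proof. by rewrite /sig adjmx0 oppr0. Qed.

Lemma sigZ c X : sig (c *: X) = conjc c *: sig X.
Proof. by rewrite /sig adjmxZ scalerN. Qed.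

Lemma sigN X : sig (- X) = - sig X.
Proof. by rewrite /sig adjmxN. Qed.

Lemma sig_bracket X Y : sig (lie_bracket X Y) = lie_bracket (sig X) (sig Y).
Proof.
rewrite /sig /lie_bracket adjmxD adjmxN !adjmxM.
by rewrite !mulrN !mulNr !opprK opprD opprK addrC.
Qed.

Lemma sig_sum (s : seq Mat) (F : Mat -> Mat) :
  sig (\sum_(Y <- s) F Y) = \sum_(Y <- s) sig (F Y).
Proof. exact: (big_morph sig sigD sig0). Qed.

Lemma sig_inj X Y : sig X = sig Y -> X = Y.
Proof. by move=> h; rewrite -(sigK X) h sigK. Qed.

Lemma conjc_i : conjc ('i : C) = - 'i.
Proof. by apply/eqP; rewrite eq_complex /= oppr0 !eqxx. Qed.

Lemma skew_sig X : adjmx X = - X -> sig X = X.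
Proof. by move=> h; rewrite /sig h opprK. Qed.

Lemma hdotDr (u v w : V) : hdot u (v + w) = hdot u v + hdot u w.
Proof. by rewrite /hdot -big_split; apply: eq_bigr => l _; rewrite mxE mulrDr. Qed.

Lemma hdotZr (c : C) (u v : V) : hdot u (c *: v) = c * hdot u v.
Proof. by rewrite /hdot mulr_sumr; apply: eq_bigr => l _; rewrite mxE mulrCA. Qed.

Lemma hdotNr (u v : V) : hdot u (- v) = - hdot u v.
Proof. by rewrite /hdot -sumrN; apply: eq_bigr => l _; rewrite mxE mulrN. Qed.

Lemma hdotC (u v : V) : hdot v u = conjc (hdot u v).
Proof.
rewrite /hdot rmorph_sum; apply: eq_bigr => l _.
by rewrite rmorphM /= conjcK mulrC.
Qed.

Lemma hdot0r (u : V) : hdot u 0 = 0.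
Proof. by rewrite /hdot big1 // => l _; rewrite mxE mulr0. Qed.

Lemma conj_mul_ge0 (x : C) : 0 <= conjc x * x.
Proof. by rewrite mulrC mulcJ_ge0. Qed.

Lemma conj_mul_eq0 (x : C) : conjc x * x = 0 -> x = 0.
Proof. by move/eqP; rewrite mulf_eq0 conjc_eq0 orbb => /eqP. Qed.

Lemma hdot_eq0 (u : V) : hdot u u = 0 -> u = 0.
Proof.
move=> h; apply/matrixP=> l j; rewrite (ord1 j) mxE.
apply: conj_mul_eq0.
by apply: (psumr_eq0P (P := predT) (fun i _ => conj_mul_ge0 (u i 0)) h).
Qed.

Definition cj (x : C) : C := conjc x.
Lemma cjN (x : C) : cj (- x) = - cj x.
Proof. exact: rmorphN. Qed.
Lemma cjD (x y : C) : cj (x + y) = cj x + cj y.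
Proof. exact: rmorphD. Qed.
Lemma cjM (x y : C) : cj (x * y) = cj x * cj y.
Proof. exact: rmorphM. Qed.
Lemma cjB (x y : C) : cj (x - y) = cj x - cj y.
Proof. exact: rmorphB. Qed.
Lemma cjK (x : C) : cj (cj x) = x.
Proof. exact: conjcK. Qed.
Lemma cj_eq0 (x : C) : (cj x == 0) = (x == 0).
Proof. exact: conjc_eq0. Qed.

Lemma cj_lin_aux (c x y : C) : cj (- (conjc c * x + y)) = c * cj (- x) + cj (- y).
Proof. by rewrite !cjN cjD cjM /cj conjcK opprD mulrN. Qed.

Lemma cj_aux (x y : C) : cj x = - x -> cj y = - y ->
  cj (- 'i * x + y) = - ('i * x + y).
Proof.
move=> hx hy; rewrite cjD cjM cjN hx hy /cj conjc_i opprK.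
by rewrite mulrN opprD.
Qed.

Lemma re0 (z : C) : cj z = - z -> z <> 0 -> complex.Im z <> 0.
Proof.
case: z => x y h nz /= hy; subst y; apply: nz; move: h; rewrite /cj /=.
move/eqP; rewrite eq_complex /= => /andP [/eqP hx _].
have x0 : x = 0.
  have : x *+ 2 = 0 by rewrite mulr2n {2}hx subrr.
  by move/eqP; rewrite mulrn_eq0 /= => /eqP.
by rewrite x0.
Qed.

End Basics.

Section Imag.
Variables (R : realType) (n : nat).
Local Notation C := R[i].
Local Notation Mat := 'M[C]_n.

Lemma trC (A B : Mat) : \tr (A * B) = \tr (B * A).
Proof. by rewrite -!mulmxE mxtrace_mulC. Qed.

Lemma trace_pos (X : Mat) : \tr (adjmx X * X) = 0 -> X = 0.
Proof.
rewrite /mxtrace => h; apply/matrixP => j i; rewrite mxE.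
have ge : forall i0 : 'I_n, true -> 0 <= (adjmx X * X) i0 i0.
  move=> i0 _; rewrite -mulmxE mxE; apply: sumr_ge0 => l _.
  by rewrite adjmxE conj_mul_ge0.
have := psumr_eq0P ge h (i := i) isT.
rewrite -mulmxE mxE => h2.
have ge2 : forall l : 'I_n, true -> 0 <= adjmx X i l * X l i.
  by move=> l _; rewrite adjmxE conj_mul_ge0.
have := psumr_eq0P ge2 h2 (i := j) isT.
by rewrite adjmxE => /conj_mul_eq0.
Qed.

Lemma root_imag (H X : Mat) (c : C) : adjmx H = - H -> X <> 0 ->
  lie_bracket H X = c *: X -> conjc c = - c.
Proof.
move=> sH nX hb.
set T := \tr (adjmx X * X).
set a := \tr (adjmx X * (H * X)).
set b := \tr (adjmx X * (X * H)).
have e1 : a - b = c * T.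
  have h1 : \tr (adjmx X * lie_bracket H X) = c * T by rewrite hb -mulmxE -scalemxAr mxtraceZ.
  by rewrite -h1 /lie_bracket mulrBr linearB.
have ca : conjc a = - a.
  rewrite /a -tr_adjmx !adjmxM adjmxK sH.
  by rewrite mulrN mulNr -mulrA linearN.
have cb : conjc b = - b.
  rewrite /b -tr_adjmx !adjmxM adjmxK sH.
  have -> : - H * adjmx X * X = - (H * (adjmx X * X)) by rewrite !mulNr mulrA.
  rewrite linearN; congr (- _); rewrite (mulrA (adjmx X)); exact: trC.
have cT : conjc T = T by rewrite /T -tr_adjmx adjmxM adjmxK.
have : (conjc c + c) * T = 0.
  rewrite mulrDl -e1.
  have -> : conjc c * T = conjc (c * T) by rewrite rmorphM /= cT.
  by rewrite -e1 rmorphB /= ca cb opprK addrC addrACA subrr addNr addr0.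
move/eqP; rewrite mulf_eq0 => /orP [/eqP h|/eqP h].
  by apply/eqP; rewrite -subr_eq0 opprK h.
by case: nX; apply: trace_pos.
Qed.

End Imag.

Section Bracket.
Variables (R : realType) (n : nat).
Local Notation C := R[i].
Local Notation Mat := 'M[C]_n.

Lemma mulZl (c : C) (X Y : Mat) : (c *: X) * Y = c *: (X * Y).
Proof. by rewrite -!mulmxE scalemxAl. Qed.
Lemma mulZr (c : C) (X Y : Mat) : X * (c *: Y) = c *: (X * Y).
Proof. by rewrite -!mulmxE scalemxAr. Qed.

Lemma brDl (X Y Z : Mat) : lie_bracket (X + Y) Z = lie_bracket X Z + lie_bracket Y Z.
Proof. by rewrite /lie_bracket mulrDl mulrDr opprD addrACA. Qed.
Lemma brDr (X Y Z : Mat) : lie_bracket X (Y + Z) = lie_bracket X Y + lie_bracket X Z.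
Proof. by rewrite /lie_bracket mulrDl mulrDr opprD addrACA. Qed.
Lemma brZl (c : C) (X Y : Mat) : lie_bracket (c *: X) Y = c *: lie_bracket X Y.
Proof. by rewrite /lie_bracket mulZl mulZr scalerBr. Qed.
Lemma brZr (c : C) (X Y : Mat) : lie_bracket X (c *: Y) = c *: lie_bracket X Y.
Proof. by rewrite /lie_bracket mulZl mulZr scalerBr. Qed.
Lemma brNl (X Y : Mat) : lie_bracket (- X) Y = - lie_bracket X Y.
Proof. by rewrite /lie_bracket mulNr mulrN opprB opprK addrC. Qed.
Lemma brNr (X Y : Mat) : lie_bracket X (- Y) = - lie_bracket X Y.
Proof. by rewrite /lie_bracket mulNr mulrN opprB opprK addrC. Qed.
Lemma br0l (Y : Mat) : lie_bracket 0 Y = 0.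
Proof. by rewrite /lie_bracket mul0r mulr0 subrr. Qed.

Lemma jacobi (A B D : Mat) : lie_bracket A (lie_bracket B D) =
  lie_bracket (lie_bracket A B) D + lie_bracket B (lie_bracket A D).
Proof.
rewrite /lie_bracket !mulrBr !mulrBl !mulrA.
set x1 := A * B * D. set x2 := A * D * B. set x3 := B * D * A. set x4 := D * B * A.
set y1 := B * A * D. set y2 := D * A * B.
clearbody x1 x2 x3 x4 y1 y2.
apply/matrixP => i j; rewrite !mxE; ring.
Qed.

End Bracket.

Section Cx.
Variables (R : realType) (n : nat).
Local Notation C := R[i].
Local Notation Mat := 'M[C]_n.
Variable k : Mat -> Prop.
Hypothesis hk : unitary_lie_algebra k.

Lemma k0 : k 0. Proof. by case: hk. Qed.
Lemma kD X Y : k X -> k Y -> k (X + Y). Proof. by case: hk => _ h _ _ _; apply: h. Qed.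
Lemma kZ (r : R) X : k X -> k (r%:C *: X). Proof. by case: hk => _ _ h _ _; apply: h. Qed.
Lemma kB X Y : k X -> k Y -> k (lie_bracket X Y). Proof. by case: hk => _ _ _ h _; apply: h. Qed.
Lemma kskew X : k X -> adjmx X = - X. Proof. by case: hk => _ _ _ _ h; apply: h. Qed.
Lemma kN X : k X -> k (- X).
Proof.
move=> h; have := kZ (-1) h.
by rewrite rmorphN rmorph1 scaleN1r.
Qed.
Lemma ksig X : k X -> sig X = X.
Proof. by move=> h; apply: skew_sig; apply: kskew. Qed.

Local Notation cx := (complexify k).

Lemma cx_k X : k X -> cx X.
Proof. by move=> h; exists X, 0; split => //; [exact: k0 | rewrite scaler0 addr0]. Qed.

Lemma cxD X Y : cx X -> cx Y -> cx (X + Y).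
Proof.
move=> [A [B [hA hB ->]]] [A' [B' [hA' hB' ->]]].
exists (A + A'), (B + B'); split; try exact: kD.
by rewrite scalerDr addrACA.
Qed.

Lemma cx0 : cx 0.
Proof. exact: cx_k k0. Qed.

Lemma cxR (r : R) X : cx X -> cx (r%:C *: X).
Proof.
move=> [A [B [hA hB ->]]]; exists (r%:C *: A), (r%:C *: B); split; try exact: kZ.
by rewrite scalerDr !scalerA mulrC.
Qed.

Lemma cxI X : cx X -> cx ('i *: X).
Proof.
move=> [A [B [hA hB ->]]]; exists (- B), A; split => //; first exact: kN.
rewrite scalerDr scalerA addrC; congr (_ + _).
have -> : ('i * 'i : C) = -1 by rewrite -expr2 sqr_i.
by rewrite scaleN1r.
Qed.

Lemma cxZ (c : C) X : cx X -> cx (c *: X).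
Proof.
move=> h; rewrite [c]complexE scalerDl -scalerA.
by apply: cxD; [apply: cxR | apply: cxI; apply: cxR].
Qed.

Lemma cxN X : cx X -> cx (- X).
Proof. by move=> h; rewrite -scaleN1r; apply: cxZ. Qed.

Lemma cxB X Y : cx X -> cx Y -> cx (lie_bracket X Y).
Proof.
move=> [A [B [hA hB ->]]] [A' [B' [hA' hB' ->]]].
rewrite !brDl !brDr !brZl !brZr.
apply: cxD; apply: cxD; try apply: cxZ; try apply: cxZ; apply: cx_k; exact: kB.
Qed.

Lemma cx_sum (s : seq Mat) : (forall Y, Y \in s -> cx Y) -> cx (\sum_(Y <- s) Y).
Proof.
move=> h; rewrite big_seq; apply: big_ind => //; [exact: cx0 | exact: cxD].
Qed.

Lemma cx_sig X : cx X -> cx (sig X).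
Proof.
move=> [A [B [hA hB ->]]]; exists A, (- B); split => //; first exact: kN.
by rewrite sigD sigZ !ksig // conjc_i scaleNr scalerN.
Qed.

Lemma cx_sig_form X : cx X -> exists A B, [/\ k A, k B, X = A + 'i *: B &
  sig X = A - 'i *: B].
Proof.
move=> [A [B [hA hB ->]]]; exists A, B; split => //.
by rewrite sigD sigZ !ksig // conjc_i scaleNr.
Qed.

Lemma cx_re X : cx X -> k (X + sig X).
Proof.
move=> /cx_sig_form [A [B [hA hB -> ->]]].
by rewrite addrACA subrr addr0; apply: kD.
Qed.

Lemma skew_split (S T : Mat) : adjmx S = - S -> adjmx T = - T -> S + 'i *: T = 0 ->
  S = 0 /\ T = 0.
Proof.
move=> hS hT h.
have h2 : - S + 'i *: T = 0.
  have := congr1 (@adjmx R n) h.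
  by rewrite adjmxD adjmxZ hS hT conjc_i adjmx0 scaleNr scalerN opprK.
have hT0 : T = 0.
  have e : ('i + 'i) *: T = 0.
    by rewrite scalerDl -[LHS]add0r -{1}(subrr S) addrACA h h2 addr0.
  move/eqP: e; rewrite scaler_eq0 => /orP [|/eqP //].
  rewrite eq_complex /= => /andP [_]; rewrite -mulr2n; move/eqP; rewrite mulr2n; move=> e; exfalso; have : (0:R) < 1 + 1 by apply: addr_gt0; apply: ltr01.
  by rewrite e ltxx.
split => //; move: h; rewrite hT0 scaler0 addr0 //.
Qed.

End Cx.

Section Main.
Variables (R : realType) (n : nat).
Local Notation C := R[i].
Local Notation Mat := 'M[C]_n.
Local Notation V := 'cV[C]_n.
Variables (k t : Mat -> Prop) (H0 : Mat) (p : V) (P : V -> V).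
Hypothesis hk : unitary_lie_algebra k.
Hypothesis ht : maximal_abelian k t.
Hypothesis hreg : regular_element k t H0.
Hypothesis hhw : highest_weight_vector k t H0 p.
Hypothesis hP : is_normal_projection k t H0 p P.

Local Notation cx := (complexify k).
Local Notation ct := (complexify t).
Local Notation N := (in_nminus k t H0).

Lemma tk X : t X -> k X. Proof. by case: ht => h _; apply: h. Qed.
Lemma t0 : t 0. Proof. by case: ht => _ [h _ _ _ _]. Qed.

Lemma ct_t X : t X -> ct X.
Proof. by move=> h; exists X, 0; split => //; [exact: t0 | rewrite scaler0 addr0]. Qed.

Lemma ct_cx X : ct X -> cx X.
Proof. by move=> [A [B [hA hB ->]]]; exists A, B; split => //; apply: tk. Qed.

Lemma ct_sig X : ct X -> ct (sig X).
Proof.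
move=> [A [B [hA hB ->]]]; exists A, (- B); split => //.
  by case: ht => _ [_ _ hZ _ _]; have := hZ (-1) B hB; rewrite rmorphN rmorph1 scaleN1r.
by rewrite sigD sigZ (ksig hk (tk hA)) (ksig hk (tk hB)) conjc_i scaleNr scalerN.
Qed.

Lemma normal_lin (c : C) w1 w2 : normal_at k t H0 p w1 -> normal_at k t H0 p w2 ->
  normal_at k t H0 p (c *: w1 + w2).
Proof.
move=> h1 h2 c' f hf.
by rewrite hdotDr hdotZr h1 // h2 // mulr0 addr0.
Qed.

Lemma normal_sub w1 w2 : normal_at k t H0 p w1 -> normal_at k t H0 p w2 ->
  normal_at k t H0 p (w1 - w2).
Proof.
by move=> h1 h2; have := normal_lin (-1) h2 h1; rewrite scaleN1r addrC.
Qed.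

Lemma P_lin (c : C) (u v : V) : P (c *: u + v) = c *: P u + P v.
Proof.
set d := P (c *: u + v) - (c *: P u + P v).
have hd : normal_at k t H0 p d.
  rewrite /d; apply: normal_sub; first by case: (hP (c *: u + v)).
  by apply: normal_lin; [case: (hP u) | case: (hP v)].
have e1 := (hP (c *: u + v)).2 d hd.
have e2 := (hP u).2 d hd.
have e3 := (hP v).2 d hd.
have : hdot d ((c *: u + v - P (c *: u + v)) - c *: (u - P u) - (v - P v)) = 0.
  move: e1 e2 e3; set x := c *: u + v - _; set y := u - P u; set z := v - P v => e1 e2 e3.
  clearbody x y z.
  by rewrite !hdotDr !hdotNr hdotZr e1 e2 e3 mulr0 !oppr0 !addr0.
have -> : (c *: u + v - P (c *: u + v)) - c *: (u - P u) - (v - P v) = - d.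
  rewrite /d scalerBr; apply/matrixP => i j; rewrite !mxE.
  move: (u i j) (v i j) (P u i j) (P v i j) (P (c *: u + v) i j) => a b a1 b1 e.
  ring.
rewrite hdotNr => /eqP; rewrite oppr_eq0 => /eqP /hdot_eq0.
by rewrite /d => /eqP; rewrite subr_eq0 => /eqP.
Qed.

Lemma P_add (u v : V) : P (u + v) = P u + P v.
Proof. by have := P_lin 1 u v; rewrite !scale1r. Qed.

Lemma P0 : P 0 = 0.
Proof. by apply: (addrI (P 0)); rewrite addr0 -P_add addr0. Qed.

Lemma P_kill (c : C) f : N f -> P (c *: p + f *m p) = 0.
Proof.
move=> hf; set v := c *: p + f *m p.
have [hw ho] := hP v.
have h1 : hdot (P v) v = 0 by rewrite hdotC hw // rmorph0.
have : hdot (P v) (v - P v) = 0 by apply: ho.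
by rewrite hdotDr hdotNr h1 sub0r => /eqP; rewrite oppr_eq0 => /eqP /hdot_eq0.
Qed.

Lemma N0 : N 0.
Proof. by exists [::]; split => //; rewrite big_nil. Qed.

Lemma rv_scale a (c : C) X : root_vector k t a X -> root_vector k t a (c *: X).
Proof.
move=> [hcx hb]; split; first exact: cxZ.
by move=> H hH; rewrite brZr hb // !scalerA mulrC.
Qed.

Lemma N_lin (c : C) f g : N f -> N g -> N (c *: f + g).
Proof.
move=> [s [hs ->]] [s' [hs' ->]].
exists (map (fun Y => c *: Y) s ++ s'); split.
  move=> Y; rewrite mem_cat => /orP [/mapP [Y0 hY0 ->]| hY]; last exact: hs'.
  have [a [ha hr]] := hs Y0 hY0; exists a; split => //; exact: rv_scale.
by rewrite big_cat big_map scaler_sumr.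
Qed.

Lemma N_cx f : N f -> cx f.
Proof.
move=> [s [hs ->]]; apply: cx_sum => // Y /hs [a [_ [h _]]]; exact: h.
Qed.

Lemma rv_sig a X : root_vector k t a X ->
  root_vector k t (fun H => cj (a (sig H))) (sig X).
Proof.
move=> [hcx hb]; split; first exact: cx_sig.
move=> H hH; rewrite -{1}(sigK H) -sig_bracket hb ?sigZ //; exact: ct_sig.
Qed.

Lemma pos_sig a Y : positive_root k t H0 a -> root_vector k t (fun H => - a H) Y ->
  Y <> 0 ->
  positive_root k t H0 (fun H => cj (- a (sig H))) /\
  root_vector k t (fun H => cj (- a (sig H))) (sig Y).
Proof.
move=> [[hlin [H [hH hne]] _] hIm] hrv hY.
have hrv' := rv_sig hrv.
split => //; split.
  split.
  - move=> c H1 H2 h1 h2 /=.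
    rewrite sigD sigZ hlin; [exact: cj_lin_aux | exact: ct_sig | exact: ct_sig].
  - exists (sig H); split; first exact: ct_sig.
    by rewrite sigK => /eqP; rewrite cj_eq0 oppr_eq0 => /eqP.
  - exists (sig Y); split => //.
    by move=> h; apply: hY; apply: sig_inj; rewrite h sig0.
have -> : sig H0 = H0 by apply: (ksig hk); apply: tk; case: hreg.
by move: hIm; case: (a H0) => x y /=; rewrite opprK.
Qed.

Lemma hw_kill a X : positive_root k t H0 a -> root_vector k t a X -> X *m p = 0.
Proof. by case: hhw => _ _ h; apply: h. Qed.

Lemma kill_sig f : N f -> sig f *m p = 0.
Proof.
move=> [s [hs ->]]; rewrite sig_sum mulmx_suml big_seq big1 // => Y hY.
case: (eqVneq Y 0) => [-> | nY]; first by rewrite sig0 mul0mx.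
have [a [ha hrv]] := hs Y hY.
have nY2 : Y <> 0 by apply/eqP.
have [hpos hrv2] := pos_sig ha hrv nY2.
exact: hw_kill hpos hrv2.
Qed.

Lemma commute_t (Z : Mat) : cx Z -> (forall H, ct H -> lie_bracket H Z = 0) -> ct Z.
Proof.
move=> [A [B [hA hB eZ]]] hc.
have hAB : forall H, t H -> lie_bracket H A = 0 /\ lie_bracket H B = 0.
  move=> H hH; apply: skew_split.
  - exact: (kskew hk (kB hk (tk hH) hA)).
  - exact: (kskew hk (kB hk (tk hH) hB)).
  by rewrite -brZr -brDr -eZ; apply: hc; apply: ct_t.
have tm : forall X, k X -> (forall H, t H -> lie_bracket H X = 0) -> t X.
  move=> X hX hH; case: ht => _ [_ _ _ _ hmax]; apply: hmax => // Y hY.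
  by have := hH Y hY; rewrite /lie_bracket => /eqP; rewrite subr_eq0 => /eqP ->.
exists A, B; split => //; apply: tm => // H hH; [exact: (hAB H hH).1 | exact: (hAB H hH).2].
Qed.

Lemma pair_kill (b g : Mat -> C) E F : positive_root k t H0 b -> root_vector k t b E ->
  positive_root k t H0 g -> root_vector k t (fun H => - g H) F ->
  P (E *m (F *m p)) = 0.
Proof.
move=> hb rb hg rg.
have [[blin _ _] _] := hb.
have [[glin _ _] _] := hg.
have eZ : E *m (F *m p) = lie_bracket E F *m p.
  rewrite mulmxA mulmxE.
  have -> : E * F = lie_bracket E F + F * E by rewrite /lie_bracket subrK.
  by rewrite mulmxDl -mulmxE -mulmxA (hw_kill hb rb) mulmx0 addr0.
rewrite eZ; set Z := lie_bracket E F.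
have cZ : cx Z := cxB hk rb.1 rg.1.
pose d := fun H => b H - g H.
have hZ : forall H, ct H -> lie_bracket H Z = d H *: Z.
  move=> H hH; rewrite /Z jacobi (rb.2 H hH) (rg.2 H hH) brZl brZr -scalerDl.
  by rewrite /d.
case: (eqVneq Z 0) => [-> | nZ]; first by rewrite mul0mx P0.
have nZ2 : Z <> 0 by apply/eqP.
case: (classic (exists H, ct H /\ d H <> 0)) => [[H1 [hH1 nd]] | hno]; last first.
  have ctZ : ct Z.
    apply: commute_t => // H hH; rewrite hZ //.
    have -> : d H = 0.
      by apply: NNPP => ne; apply: hno; exists H.
    by rewrite scale0r.
  case: hhw => _ [lam hlam] _.
  rewrite hlam //.
  by have := P_kill (lam Z) N0; rewrite mul0mx addr0.
have rZ : root_vector k t d Z by split.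
have hlin : forall (c : C) X1 X2, ct X1 -> ct X2 -> d (c *: X1 + X2) = c * d X1 + d X2.
  move=> c X1 X2 h1 h2; rewrite /d blin // glin //; ring.
have iroot : is_root k t d.
  by split => //; [exists H1 | exists Z].
have him : forall H, t H -> cj (d H) = - d H.
  move=> H hH; apply: (root_imag (kskew hk (tk hH)) nZ2).
  exact: hZ (ct_t hH).
have dH0 : d H0 <> 0 by case: hreg => _ h; apply: h.
have tH0 : t H0 by case: hreg.
have imH0 := re0 (him H0 tH0) dH0.
case: (ltrgtP (complex.Im (d H0)) 0) => hs; last by [].
  (* negative: Z in n_- *)
  pose e := fun H => - d H.
  have rsZ := rv_sig rZ.
  have rZe : root_vector k t e (sig Z).
    split; first exact: rsZ.1.
    move=> H hH; rewrite rsZ.2 //; congr (_ *: _).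
    move: hH => [A [B [hA hB ->]]].
    have -> : sig (A + 'i *: B) = - 'i *: B + A.
      by rewrite sigD sigZ (ksig hk (tk hA)) (ksig hk (tk hB)) conjc_i addrC.
    rewrite /e !(addrC A) !hlin; try (by apply: ct_t).
    exact: cj_aux (him B hB) (him A hA).
  have pe : positive_root k t H0 e.
    split.
      split.
      - by move=> c X1 X2 h1 h2; rewrite /e hlin //; ring.
      - by exists H1; split => // /eqP; rewrite oppr_eq0 => /eqP.
      - exists (sig Z); split => //.
        by move=> h; apply: nZ2; apply: sig_inj; rewrite h sig0.
    by move: hs; rewrite /e; case: (d H0) => x y /=; rewrite oppr_gt0.
  have NZ : N Z.
    exists [:: Z]; split; last by rewrite big_seq1.
    move=> Y; rewrite mem_seq1 => /eqP ->; exists e; split => //.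
    by split => // H hH; rewrite hZ // /e opprK.
  by have := P_kill 0 NZ; rewrite scale0r add0r.
have pd : positive_root k t H0 d by [].
by rewrite (hw_kill pd rZ) P0.
Qed.

Lemma kill_cross f g : N f -> N g -> P (sig f *m (g *m p)) = 0.
Proof.
move=> [s [hs ->]] [s' [hs' ->]].
have Pind : forall (T : eqType) (r : seq T) (F : T -> V),
    (forall x, x \in r -> P (F x) = 0) -> P (\sum_(x <- r) F x) = 0.
  move=> T r F h; rewrite big_seq; apply: (big_ind (fun v => P v = 0)).
  - exact: P0.
  - by move=> x y hx hy; rewrite P_add hx hy addr0.
  - exact: h.
rewrite sig_sum mulmx_suml; apply: (Pind) => Y hY.
case: (eqVneq Y 0) => [-> | nY]; first by rewrite sig0 mul0mx P0.
have nY2 : Y <> 0 by apply/eqP.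
have [a [ha hrv]] := hs Y hY.
have [hpos hrv2] := pos_sig ha hrv nY2.
rewrite mulmx_suml mulmx_sumr; apply: (Pind) => Y' hY'.
have [g' [hg' rg']] := hs' Y' hY'.
exact: pair_kill hpos hrv2 hg' rg'.
Qed.

Lemma Xrep f : N f -> k (f + sig f) /\ (f + sig f) *m p = f *m p.
Proof.
move=> hf; split; first exact: (cx_re hk (N_cx hf)).
by rewrite mulmxDl kill_sig // addr0.
Qed.

Lemma II_eq (II : V -> V -> V) f g : is_second_fundamental_form k p P II ->
  N f -> N g -> II (f *m p) (g *m p) = P (f *m (g *m p)).
Proof.
move=> hII hf hg.
have [kf ef] := Xrep hf; have [kg eg] := Xrep hg.
by rewrite -ef -eg hII // eg mulmxDl P_add kill_cross // addr0.
Qed.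

End Main.

Local Close Scope complex_scope.
Unset Implicit Arguments.
Set Strict Implicit.

Theorem mainTheorem3 (R : realType) (n : nat)
  (k t : 'M[R[i]]_n -> Prop) (H0 : 'M[R[i]]_n) (p : 'cV[R[i]]_n)
  (P : 'cV[R[i]]_n -> 'cV[R[i]]_n) (II : 'cV[R[i]]_n -> 'cV[R[i]]_n -> 'cV[R[i]]_n) :
  unitary_lie_algebra k ->
  real_irreducible k ->
  maximal_abelian k t ->
  regular_element k t H0 ->
  highest_weight_vector k t H0 p ->
  hdot p p = 1 ->
  is_normal_projection k t H0 p P ->
  is_second_fundamental_form k p P II ->
  C_bilinear_on (in_nminus_p k t H0 p) II /\
  (forall f f', in_nminus k t H0 f -> in_nminus k t H0 f' ->
     II (f *m p) (f' *m p) = P (f *m (f' *m p))).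
Proof.
move=> hk _ ht hreg hhw _ hP hII.
have IIe : forall f g, in_nminus k t H0 f -> in_nminus k t H0 g ->
    II (f *m p) (g *m p) = P (f *m (g *m p)).
  by move=> f g hf hg; apply: (II_eq hk ht hreg hhw hP hII hf hg).
split; last exact: IIe.
move=> c u u' v [f [hf ->]] [f' [hf' ->]] [g [hg ->]].
have e : c *: (f *m p) + f' *m p = (c *: f + f') *m p by rewrite mulmxDl scalemxAl.
have hN := N_lin hk c hf hf'.
rewrite e !IIe //; split.
  by rewrite mulmxDl -scalemxAl (P_lin hP).
by rewrite -e mulmxDr -scalemxAr (P_lin hP).
Qed.
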